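(* Let $R$ be a semi-local ring containing $\mathbb Q$, let $n\ge0$ and $m\ge1$. Then the map $d\colon tR_m\otimes_R\Omega^n_R\to\widetilde\Omega^{n+1}_{R_m}$, $t^i\otimes\omega\mapsto d(t^i\omega)$, is injective.
   Context: $R_m=R[t]/(t^{m+1})$, $tR_m$ the ideal generated by $t$; $\Omega^n$ denotes absolute Kähler differentials, $\widetilde\Omega^{n}_{R_m}=\ker(\Omega^{n}_{R_m}\to\Omega^{n}_R)$, and $d$ is the exterior derivative. *)

(* Defs.v *)
From HB Require Import structures.
From mathcomp Require Import all_boot all_order all_algebra.
Set Implicit Arguments. Unset Strict Implicit. Unset Printing Implicit Defensive.
Import Order.TTheory GRing.Theory Num.Theory.
Local Open Scope ring_scope.

Section Ideals.
Variable R : comNzRingType.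

Definition is_ideal (I : R -> Prop) : Prop :=
  [/\ I 0, (forall x y, I x -> I y -> I (x + y)) & (forall r x, I x -> I (r * x))].

Definition is_maximal_ideal (I : R -> Prop) : Prop :=
  [/\ is_ideal I, ~ I 1 &
      (forall J : R -> Prop, is_ideal J -> (forall x, I x -> J x) ->
         ~ J 1 -> forall x, J x -> I x)].

Definition semilocal : Prop :=
  exists (k : nat) (M : nat -> R -> Prop),
    forall I, is_maximal_ideal I -> exists2 i, (i < k)%N & forall x, I x <-> M i x.

(* R contains Q : every positive integer is invertible in R *)
Definition contains_Q : Prop :=
  forall k : nat, (0 < k)%N -> exists y : R, k%:R * y = 1.

End Ideals.

(* R_m = R[t]/(t^(m+1)) *)
Definition Rtrunc (R : comNzRingType) (m : nat) := {poly %/ ('X^(m.+1) : {poly R})}.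
Definition Rincl (R : comNzRingType) (m : nat) (r : R) : Rtrunc R m := qpolyC _ r.
Definition tvar (R : comNzRingType) (m : nat) : Rtrunc R m := 'qX.

(* Absolute Kaehler differentials Omega^n_A (over Z), by presentation. *)
(* A formal sum  sum_k c_k (a_k, [b_1;..;b_n])  with c_k : int stands  *)
(* for  sum_k c_k a_k db_1 /\ ... /\ db_n .  Omega^n_A is the quotient *)
(* of the free Z-module on A x A^n by the subgroup generated by:       *)
(*   additivity in the coefficient a, additivity of d in each slot,    *)
(*   the Leibniz rule in each slot, and the alternating relations      *)
(*   (equal entries give 0; swapping two entries changes the sign).    *)
Section Kaehler.
Variable A : comNzRingType.

Definition fsum := seq (int * (A * seq A)).

Definition fcoef (l : fsum) (k : A * seq A) : int :=
  \sum_(p <- l | p.2 == k) p.1.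

Definition swap_at (b : seq A) (i j : nat) : seq A :=
  set_nth 0 (set_nth 0 b i (nth 0 b j)) j (nth 0 b i).

Inductive omega_gen (n : nat) : fsum -> Prop :=
| gen_addc (a a' : A) (b : seq A) : size b = n ->
    omega_gen n [:: (1, (a + a', b)); (-1, (a, b)); (-1, (a', b))]
| gen_adds (a : A) (b : seq A) (i : nat) (x y : A) : size b = n -> (i < n)%N ->
    omega_gen n [:: (1, (a, set_nth 0 b i (x + y)));
                    (-1, (a, set_nth 0 b i x)); (-1, (a, set_nth 0 b i y))]
| gen_leibniz (a : A) (b : seq A) (i : nat) (x y : A) : size b = n -> (i < n)%N ->
    omega_gen n [:: (1, (a, set_nth 0 b i (x * y)));
                    (-1, (a * x, set_nth 0 b i y)); (-1, (a * y, set_nth 0 b i x))]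
| gen_alt (a : A) (b : seq A) (i j : nat) : size b = n -> (i < j)%N -> (j < n)%N ->
    nth 0 b i = nth 0 b j -> omega_gen n [:: (1, (a, b))]
| gen_anti (a : A) (b : seq A) (i j : nat) : size b = n -> (i < j)%N -> (j < n)%N ->
    omega_gen n [:: (1, (a, b)); (1, (a, swap_at b i j))].

Definition omega_elt (n : nat) (l : fsum) : bool :=
  all (fun p => size p.2.2 == n) l.

Definition omega_zero (n : nat) (l : fsum) : Prop :=
  exists gs : seq (int * fsum),
    (forall g, g \in gs -> omega_gen n g.2) /\
    forall k, fcoef l k = \sum_(g <- gs) g.1 * fcoef g.2 k.

(* exterior derivative  d(a db_1..db_n) = da db_1 .. db_n *)
Definition dform (l : fsum) : fsum :=
  map (fun p => (p.1, (1, p.2.1 :: p.2.2))) l.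

Definition scal_fsum (x : A) (l : fsum) : fsum :=
  map (fun p => (p.1, (x * p.2.1, p.2.2))) l.

End Kaehler.

Definition map_fsum (A B : comNzRingType) (f : A -> B) (l : fsum A) : fsum B :=
  map (fun p => (p.1, (f p.2.1, map f p.2.2))) l.

(* Since tR_m is the
   free R-module with basis t, t^2, ..., t^m, an element of the source is
   sum_{i=1}^m t^i (x) w_i with w_i in Omega^n_R; it is sent to
   sum_i d(t^i w_i). Index i : 'I_m corresponds to t^(i+1). *)
Definition d_tensor (R : comNzRingType) (m : nat) (w : 'I_m -> fsum R)
  : fsum (Rtrunc R m) :=
  dform (flatten [seq scal_fsum (tvar R m ^+ (val i).+1) (map_fsum (@Rincl R m) (w i))
                 | i : 'I_m <- enum 'I_m]).

(* Main.v *)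
Require Import Defs.
From mathcomp Require Import all_boot all_order all_algebra.
From HB Require Import structures.
From mathcomp Require Import boolp generic_quotient ring.
Set Implicit Arguments. Unset Strict Implicit. Unset Printing Implicit Defensive.
Import Order.TTheory GRing.Theory Num.Theory.
Import Pdiv.CommonRing.
Local Open Scope ring_scope.

Section Fs.
Variable R : comNzRingType.
Implicit Types l : fsum R.

Definition negf l : fsum R := map (fun p => (- p.1, p.2)) l.

Lemma fcoef_cat l1 l2 k : fcoef (l1 ++ l2) k = fcoef l1 k + fcoef l2 k.
Proof. by rewrite /fcoef big_cat. Qed.
Lemma fcoef_neg l k : fcoef (negf l) k = - fcoef l k.
Proof. by rewrite /fcoef big_map sumrN. Qed.
Lemma fcoef_nil k : fcoef (A:=R) [::] k = 0.
Proof. by rewrite /fcoef big_nil. Qed.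

Variable n : nat.
Local Notation Z := (@omega_zero R n).

Lemma Z_fc l l1 l2 : (forall k, fcoef l k = fcoef l1 k + fcoef l2 k) -> Z l1 -> Z l2 -> Z l.
Proof.
move=> E [g1 [H1 E1]] [g2 [H2 E2]]; exists (g1 ++ g2); split.
  by move=> g; rewrite mem_cat => /orP [] ?; [apply: H1|apply: H2].
by move=> k; rewrite E E1 E2 big_cat.
Qed.
Lemma Z_0 l : (forall k, fcoef l k = 0) -> Z l.
Proof. by move=> E; exists [::]; split => // k; rewrite E big_nil. Qed.
Lemma Z_neg l : Z l -> Z (negf l).
Proof.
move=> [g [H E]]; exists (map (fun g => (- g.1, g.2)) g); split.
  by move=> x /mapP [y /H ? ->].
by move=> k; rewrite fcoef_neg E big_map -sumrN; apply: eq_bigr => i _; rewrite mulNr.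
Qed.
Lemma Z_gen g : omega_gen n g -> Z g.
Proof.
move=> H; exists [:: (1, g)]; split; first by move=> x; rewrite inE => /eqP ->.
by move=> k; rewrite big_seq1 mul1r.
Qed.

Definition oeq : rel (fsum R) := fun l1 l2 => `[< Z (l1 ++ negf l2) >].

Lemma oeq_refl : reflexive oeq.
Proof. move=> l; apply/asboolP/Z_0 => k; by rewrite fcoef_cat fcoef_neg subrr. Qed.
Lemma oeq_sym : symmetric oeq.
Proof.
move=> l1 l2; apply/asboolP/asboolP => /Z_neg H; apply: (Z_fc _ H (Z_0 (l:=[::]) (fun k => fcoef_nil k))) => k;
by rewrite fcoef_nil addr0 fcoef_neg !fcoef_cat !fcoef_neg opprD opprK addrC.
Qed.
Lemma oeq_trans : transitive oeq.
Proof.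
move=> l2 l1 l3 /asboolP H1 /asboolP H2; apply/asboolP; apply: (Z_fc _ H1 H2) => k.
rewrite !fcoef_cat !fcoef_neg; by rewrite addrA subrK.
Qed.

Canonical oeq_equiv := EquivRel oeq oeq_refl oeq_sym oeq_trans.
Definition Om := {eq_quot oeq}%qT.
Local Open Scope quotient_scope.
Definition cl (l : fsum R) : Om := \pi_Om l.
Lemma clP l1 l2 : cl l1 = cl l2 <-> Z (l1 ++ negf l2).
Proof. split; [move/eqquotP/asboolP => //| move=> H; apply/eqquotP/asboolP => //]. Qed.
Lemma cl_fc l1 l2 : (forall k, fcoef l1 k = fcoef l2 k) -> cl l1 = cl l2.
Proof. by move=> E; apply/clP/Z_0 => k; rewrite fcoef_cat fcoef_neg E subrr. Qed.
Lemma cl_repr (x : Om) : cl (repr x) = x.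
Proof. exact: reprK. Qed.

Definition om_add (x y : Om) : Om := cl (repr x ++ repr y).
Definition om_opp (x : Om) : Om := cl (negf (repr x)).
Definition om_zero : Om := cl [::].

Lemma cl_eqZ l1 l2 : Z (l1 ++ negf l2) -> cl l1 = cl l2.
Proof. by move/clP. Qed.
Lemma repr_cl l : Z (repr (cl l) ++ negf l).
Proof. by apply/clP; rewrite cl_repr. Qed.

Lemma om_addE l1 l2 : om_add (cl l1) (cl l2) = cl (l1 ++ l2).
Proof.
apply: cl_eqZ; apply: (Z_fc _ (repr_cl l1) (repr_cl l2)) => k.
rewrite !(fcoef_cat, fcoef_neg). rewrite opprD; rewrite !addrA; congr (_ + _).
by rewrite -!addrA; congr (_ + _); rewrite addrC.
Qed.
Lemma om_oppE l : om_opp (cl l) = cl (negf l).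
Proof.
apply: cl_eqZ; have := Z_neg (repr_cl l); apply: Z_fc (Z_0 (l := [::]) (fun k => fcoef_nil k)) => k.
by rewrite !(fcoef_cat, fcoef_neg, fcoef_nil) sub0r opprB opprK addrC.
Qed.

Lemma om_elim (P : Om -> Prop) : (forall l, P (cl l)) -> forall x, P x.
Proof. by move=> H x; rewrite -(cl_repr x). Qed.

Lemma om_addA : associative om_add.
Proof.
elim/om_elim => a; elim/om_elim => b; elim/om_elim => c.
by rewrite !om_addE catA.
Qed.
Lemma om_addC : commutative om_add.
Proof.
elim/om_elim => a; elim/om_elim => b; rewrite !om_addE; apply: cl_fc => k.
by rewrite !fcoef_cat addrC.
Qed.
Lemma om_add0 : left_id om_zero om_add.
Proof. by elim/om_elim => a; rewrite /om_zero om_addE. Qed.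
Lemma om_addN : left_inverse om_zero om_opp om_add.
Proof.
elim/om_elim => a; rewrite om_oppE om_addE; apply: cl_fc => k.
by rewrite fcoef_cat fcoef_neg fcoef_nil addNr.
Qed.
End Fs.

HB.instance Definition _ (R : comNzRingType) (n : nat) := Choice.on (Om R n).
HB.instance Definition _ (R : comNzRingType) (n : nat) :=
  GRing.isZmodule.Build (Om R n) (@om_addA R n) (@om_addC R n) (@om_add0 R n) (@om_addN R n).

Lemma set_nth_catr (T : Type) (x0 : T) (p s : seq T) k z :
  set_nth x0 (p ++ s) (size p + k) z = p ++ set_nth x0 s k z.
Proof. by elim: p => //= a p IH; rewrite IH. Qed.

Lemma set_nth_mid (T : Type) (x0 : T) (p q : seq T) x z :
  set_nth x0 (p ++ x :: q) (size p) z = p ++ z :: q.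
Proof. by have := set_nth_catr x0 p (x :: q) 0 z; rewrite addn0. Qed.

Lemma rel3 (V : zmodType) (u v w : V) : u *~ 1 + (v *~ -1 + w *~ -1) = 0 -> u = v + w.
Proof. by rewrite mulr1z !mulrN1z -opprD => /eqP; rewrite subr_eq0 => /eqP. Qed.

Section OmR.
Variables (R : comNzRingType) (n : nat).
Local Notation Om := (Om R n).
Local Notation cl := (@cl R n).
Local Notation Z := (@omega_zero R n).

Lemma cl_cat l1 l2 : cl (l1 ++ l2) = cl l1 + cl l2.
Proof. by rewrite -om_addE. Qed.
Lemma cl_nil : cl [::] = 0.
Proof. by []. Qed.
Lemma cl_cons p l : cl (p :: l) = cl [:: p] + cl l.
Proof. by rewrite -cl_cat. Qed.
Lemma cl_single c k : cl [:: (c, k)] = cl [:: (1, k)] *~ c.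
Proof.
have D c1 c2 : cl [:: (c1 + c2, k)] = cl [:: (c1, k)] + cl [:: (c2, k)].
  rewrite -cl_cat; apply: cl_fc => k'.
  by rewrite fcoef_cat /fcoef !big_cons !big_nil !addr0; case: ifP => // _; rewrite addr0.
have P0 : cl [:: (0, k)] = 0.
  by apply: (addIr (cl [:: (0, k)])); rewrite -D addr0 add0r.
have Pn (j : nat) : cl [:: (j%:Z, k)] = cl [:: (1, k)] *+ j.
  elim: j => [|j IH]; first by rewrite P0.
  by rewrite -[j.+1]addn1 PoszD D IH addn1 mulrSr.
case: c => j; first by rewrite Pn.
rewrite NegzE mulrNz -pmulrn -Pn; apply/eqP; by rewrite -addr_eq0 -D addNr P0.
Qed.
Lemma clE l : cl l = \sum_(p <- l) cl [:: (1, p.2)] *~ p.1.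
Proof.
elim: l => [|[c k] l IH]; first by rewrite big_nil.
by rewrite cl_cons big_cons IH cl_single.
Qed.
Lemma cl_gen g : omega_gen n g -> cl g = 0.
Proof. by move=> H; apply: cl_eqZ; rewrite /= cats0; apply: Z_gen. Qed.
Lemma cl_zero l : cl l = 0 -> Z l.
Proof. by move/clP; rewrite /= cats0. Qed.

Definition om (a : R) (b : seq R) : Om := if size b == n then cl [:: (1, (a, b))] else 0.

Lemma om_addc a a' b : om (a + a') b = om a b + om a' b.
Proof.
rewrite /om; case: eqP => [Hb|]; last by rewrite addr0.
have := cl_gen (gen_addc a a' Hb); rewrite clE !big_cons big_nil /= addr0.
exact: rel3.
Qed.
Lemma om0 b : om 0 b = 0.
Proof. by apply: (addIr (om 0 b)); rewrite -om_addc !add0r. Qed.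

Lemma om_adds a p q x y : om a (p ++ (x + y) :: q) = om a (p ++ x :: q) + om a (p ++ y :: q).
Proof.
rewrite /om !size_cat /=; case: eqP => [Hb|]; last by rewrite addr0.
have Hb' : size (p ++ 0 :: q) = n by rewrite size_cat.
have Hi : (size p < n)%N by rewrite -Hb addnS ltnS leq_addr.
have := cl_gen (gen_adds a x y Hb' Hi); rewrite !set_nth_mid clE !big_cons big_nil /= addr0.
exact: rel3.
Qed.
Lemma om_slot0 a p q : om a (p ++ 0 :: q) = 0.
Proof. by apply: (addIr (om a (p ++ 0 :: q))); rewrite -om_adds !add0r. Qed.

Lemma om_leib a p q x y : om a (p ++ (x * y) :: q) = om (a * x) (p ++ y :: q) + om (a * y) (p ++ x :: q).
Proof.
rewrite /om !size_cat /=; case: eqP => [Hb|]; last by rewrite addr0.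
have Hb' : size (p ++ 0 :: q) = n by rewrite size_cat.
have Hi : (size p < n)%N by rewrite -Hb addnS ltnS leq_addr.
have := cl_gen (gen_leibniz a x y Hb' Hi); rewrite !set_nth_mid clE !big_cons big_nil /= addr0.
exact: rel3.
Qed.

Lemma om_anti a p q x y : om a (p ++ x :: y :: q) = - om a (p ++ y :: x :: q).
Proof.
rewrite /om !size_cat /=; case: eqP => [Hb|]; last by rewrite oppr0.
have Hi : (size p < (size p).+1)%N by [].
have Hj : ((size p).+1 < n)%N by rewrite -Hb !addnS ltnS ltnS leq_addr.
have Hb' : size (p ++ x :: y :: q) = n by rewrite size_cat.
have := cl_gen (gen_anti a Hb' Hi Hj).
have -> : swap_at (p ++ x :: y :: q) (size p) (size p).+1 = p ++ y :: x :: q.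
  rewrite /swap_at !nth_cat ltnn subnn ltnNge leqnSn /= subSnn /=.
  by rewrite set_nth_mid -addn1 set_nth_catr.
rewrite clE !big_cons big_nil /= addr0 !mulr1z.
by move/eqP; rewrite addr_eq0 => /eqP.
Qed.
End OmR.

Section Trunc.
Variables (R : comNzRingType) (n m e : nat).
Hypothesis he : (e < m)%N.
Local Notation A := (Rtrunc R m).
Local Notation pv x := (x : {poly R}).
Local Notation Om := (Om R n).
Local Notation om := (@om R n).

Definition mono (u : R) (k : nat) : A := Rincl m u * tvar R m ^+ k.

Lemma mk_monicE : mk_monic ('X^(m.+1) : {poly R}) = 'X^(m.+1).
Proof. by rewrite mk_monic_Xn. Qed.

Lemma pv_in (p : {poly R}) : pv (in_qpoly ('X^(m.+1)) p) = rmodp p 'X^(m.+1).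
Proof. by rewrite /= mk_monicE. Qed.

Lemma monoE u k : mono u k = in_qpoly ('X^(m.+1)) (u%:P * 'X^k).
Proof.
rewrite rmorphM rmorphXn /=; congr (_ * _ ^+ _).
apply: val_inj => /=; rewrite mk_monicE rmodp_small //.
by rewrite size_polyXn (leq_ltn_trans (size_polyC_leq1 _)).
Qed.

Lemma pv_mono u k : pv (mono u k) = if (k <= m)%N then u%:P * 'X^k else 0.
Proof.
rewrite monoE pv_in; case: leqP => hk.
  rewrite rmodp_small // size_polyXn (leq_ltn_trans (size_polyMleq _ _)) //.
  rewrite size_polyXn addnS ltnS (leq_trans (leq_add (size_polyC_leq1 u) (leqnn k))) //.
rewrite -(subnK hk) exprD mulrA; apply: Pdiv.RingMonic.rmodp_mull.
exact: monicXn.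
Qed.

Lemma coef_mono u k j : (pv (mono u k))`_j = if (k <= m)%N && (j == k) then u else 0.
Proof.
rewrite pv_mono; case: (k <= m)%N; last by rewrite coef0.
by rewrite coefCM coefXn; case: eqP => _ /=; rewrite ?mulr1 ?mulr0.
Qed.

Lemma pv_size (x : A) j : (m < j)%N -> (pv x)`_j = 0.
Proof.
move=> hj; apply: nth_default.
have H : (size (pv x) <= m.+1)%N.
  by apply: leq_trans (size_npoly x) _; rewrite mk_monicE size_polyXn.
exact: leq_trans H hj.
Qed.

Lemma A_decomp (x : A) : x = \sum_(k < m.+1) mono (pv x)`_k k.
Proof.
apply: val_inj => /=; apply/polyP => j.
rewrite (poly_of_qpoly_sum _ _ (fun k : 'I_m.+1 => mono (pv x)`_k k)) coef_sum.
under eq_bigr => k _ do rewrite coef_mono -ltnS ltn_ord /=.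
case: (ltnP j m.+1) => hj.
  rewrite (bigD1 (Ordinal hj)) //= eqxx big1 ?addr0 // => k /negbTE.
  by rewrite eq_sym -val_eqE /= => ->.
rewrite pv_size // big1 // => k _; case: eqP => // E.
by move: (ltn_ord k); rewrite -E ltnNge hj.
Qed.

Lemma mono_red (V : zmodType) (f g : A -> V) :
  (forall x y, f (x + y) = f x + f y) -> (forall x y, g (x + y) = g x + g y) ->
  (forall u k, (k < m.+1)%N -> f (mono u k) = g (mono u k)) -> forall x, f x = g x.
Proof.
move=> fD gD H x; have f0 : f 0 = 0 by apply: (addIr (f 0)); rewrite -fD addr0 add0r.
have g0 : g 0 = 0 by apply: (addIr (g 0)); rewrite -gD addr0 add0r.
rewrite (A_decomp x) (big_morph f fD f0) (big_morph g gD g0).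
by apply: eq_bigr => k _; apply: H.
Qed.

Lemma pvD (x y : A) : pv (x + y) = pv x + pv y.
Proof. by []. Qed.

Lemma mono_mul u v k l : mono u k * mono v l = mono (u * v) (k + l).
Proof. by rewrite /mono /Rincl qpolyCM exprD; ring. Qed.

Lemma pvM (x y : A) : exists Q, pv (x * y) = pv x * pv y + 'X^(m.+1) * Q.
Proof.
exists (- rdivp (pv x * pv y) 'X^(m.+1)).
rewrite poly_of_qpolyM; move: (pv x * pv y) => p; rewrite mk_monicE.
rewrite {2}(Pdiv.RingMonic.rdivp_eq (monicXn R m.+1) p).
ring.
Qed.

Lemma derivXQ (Q : {poly R}) : exists Q2, ('X^(m.+1) * Q)^`() = 'X^m * Q2.
Proof.
exists (Q *+ m.+1 + 'X * Q^`()); rewrite derivM derivXn /= exprS; ring.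
Qed.

Fixpoint T (P : {poly R}) (pre : seq R) (r : seq A) : Om :=
  if r is x :: r' then \sum_(k < m.+1) T (P * 'X^k) (rcons pre (pv x)`_k) r'
  else om P`_e pre.

Lemma T_addP P Q pre r : T (P + Q) pre r = T P pre r + T Q pre r.
Proof.
elim: r P Q pre => [|x r IH] P Q pre /=; first by rewrite coefD om_addc.
by rewrite -big_split /=; apply: eq_bigr => k _; rewrite mulrDl IH.
Qed.
Lemma T_0P pre r : T 0 pre r = 0.
Proof. by apply: (addIr (T 0 pre r)); rewrite -T_addP !add0r. Qed.

Lemma T_vanish N Q pre r : (e < N)%N -> T ('X^N * Q) pre r = 0.
Proof.
move=> hN; elim: r Q pre => [|x r IH] Q pre /=; first by rewrite coefXnM hN om0.
by apply: big1 => k _; rewrite -mulrA IH.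
Qed.

Lemma T_pre_add P p1 p2 u v r :
  T P (p1 ++ (u + v) :: p2) r = T P (p1 ++ u :: p2) r + T P (p1 ++ v :: p2) r.
Proof.
elim: r P p2 => [|x r IH] P p2 /=; first exact: om_adds.
by rewrite -big_split; apply: eq_bigr => k _; rewrite !rcons_cat /= IH.
Qed.
Lemma T_pre0 P p1 p2 r : T P (p1 ++ 0 :: p2) r = 0.
Proof. by apply: (addIr (T P (p1 ++ 0 :: p2) r)); rewrite -T_pre_add !add0r. Qed.

Lemma T_pre_mul P p1 p2 u v r :
  T P (p1 ++ (u * v) :: p2) r = T (P * u%:P) (p1 ++ v :: p2) r + T (P * v%:P) (p1 ++ u :: p2) r.
Proof.
elim: r P p2 => [|x r IH] P p2 /=; first by rewrite om_leib !coefMC.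
rewrite -big_split; apply: eq_bigr => k _; rewrite !rcons_cat /= IH.
by rewrite ![_ * _%:P * 'X^k]mulrAC.
Qed.

Lemma T_pre_anti P p1 p2 u v r :
  T P (p1 ++ u :: v :: p2) r = - T P (p1 ++ v :: u :: p2) r.
Proof.
elim: r P p2 => [|x r IH] P p2 /=; first exact: om_anti.
by rewrite -sumrN; apply: eq_bigr => k _; rewrite !rcons_cat /= IH.
Qed.

Lemma T_add P pre q x y r :
  T P pre (q ++ (x + y) :: r) = T P pre (q ++ x :: r) + T P pre (q ++ y :: r).
Proof.
elim: q P pre => [|z q IH] P pre /=.
  rewrite -big_split; apply: eq_bigr => k _.
  have E : (pv (x + y))`_k = (pv x)`_k + (pv y)`_k by rewrite -coefD.
  by rewrite E -!cats1 T_pre_add.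
by rewrite -big_split; apply: eq_bigr => k _; rewrite IH.
Qed.

Lemma T_mono P pre u k r : T P pre (mono u k :: r) = T (P * 'X^k) (rcons pre u) r.
Proof.
rewrite /=; case: (leqP k m) => hk.
  rewrite (bigD1 (Ordinal (hk : (k < m.+1)%N))) //= coef_mono hk eqxx /=.
  rewrite big1 ?addr0 // => j /negbTE; rewrite -val_eqE /= => hj.
  by rewrite coef_mono hj andbF -cats1 T_pre0.
rewrite big1; last by move=> j _; rewrite coef_mono leqNgt hk /= -cats1 T_pre0.
by rewrite mulrC T_vanish // (ltn_trans he hk).
Qed.

Lemma T_mul0 P pre x y r :
  T P pre ((x * y) :: r) = T (P * pv x) pre (y :: r) + T (P * pv y) pre (x :: r).
Proof.
move: x; apply: (@mono_red _ (fun x => T P pre ((x * y) :: r))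
   (fun x => T (P * pv x) pre (y :: r) + T (P * pv y) pre (x :: r))) => [x1 x2|x1 x2|u k hk].
- by rewrite mulrDl (T_add P pre [::]).
- by rewrite pvD mulrDr T_addP (T_add _ pre [::]) addrACA.
move: y; apply: (@mono_red _ (fun y => T P pre ((mono u k * y) :: r))
   (fun y => T (P * pv (mono u k)) pre (y :: r) + T (P * pv y) pre (mono u k :: r))) => [y1 y2|y1 y2|v l hl].
- by rewrite mulrDr (T_add P pre [::]).
- by rewrite pvD mulrDr T_addP (T_add _ pre [::]) addrACA.
move: hk hl; rewrite !ltnS => hk hl.
rewrite mono_mul !T_mono -!cats1 T_pre_mul !pv_mono hk hl.
have E1 : P * 'X^(k + l) * u%:P = P * (u%:P * 'X^k) * 'X^l by rewrite exprD; ring.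
have E2 : P * 'X^(k + l) * v%:P = P * (v%:P * 'X^l) * 'X^k by rewrite exprD; ring.
by rewrite E1 E2.
Qed.

Lemma T_mul P pre q x y r :
  T P pre (q ++ (x * y) :: r) = T (P * pv x) pre (q ++ y :: r) + T (P * pv y) pre (q ++ x :: r).
Proof.
elim: q P pre => [|z q IH] P pre; first exact: T_mul0.
rewrite [in LHS]/= [T (P * pv x) _ _]/= [T (P * pv y) _ _]/=.
rewrite -big_split; apply: eq_bigr => k _; rewrite IH.
by rewrite ![_ * pv _ * 'X^k]mulrAC.
Qed.

Lemma T_anti P pre q x y r :
  T P pre (q ++ x :: y :: r) = - T P pre (q ++ y :: x :: r).
Proof.
elim: q P pre => [|z q IH] P pre /=; last first.
  by rewrite -sumrN; apply: eq_bigr => k _; rewrite IH.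
rewrite exchange_big -sumrN; apply: eq_bigr => k _ /=.
rewrite -sumrN; apply: eq_bigr => l _ /=.
by rewrite -!cats1 -!catA /= T_pre_anti mulrAC.
Qed.

Definition sg (k : nat) (v : Om) : Om := if odd k then - v else v.
Lemma sgD k a b : sg k (a + b) = sg k a + sg k b.
Proof. by rewrite /sg; case: odd; rewrite ?opprD. Qed.
Lemma sg0 k : sg k 0 = 0.
Proof. by rewrite /sg; case: odd; rewrite ?oppr0. Qed.
Lemma sgN k a : sg k (- a) = - sg k a.
Proof. by rewrite /sg; case: odd. Qed.
Lemma sgS k a : sg k.+1 a = - sg k a.
Proof. by rewrite /sg /=; case: odd; rewrite ?opprK. Qed.
Lemma sg_sum k (I : Type) (s : seq I) (G : I -> Om) : sg k (\sum_(i <- s) G i) = \sum_(i <- s) sg k (G i).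
Proof. exact: (big_morph _ (sgD k) (sg0 k)). Qed.

Fixpoint F (P : {poly R}) (pre : seq R) (r : seq A) : Om :=
  if r is x :: r' then \sum_(k < m.+1) F (P * 'X^k) (rcons pre (pv x)`_k) r'
                        + sg (size pre) (T (P * (pv x)^`()) pre r')
  else 0.

Lemma F_addP P Q pre r : F (P + Q) pre r = F P pre r + F Q pre r.
Proof.
elim: r P Q pre => [|x r IH] P Q pre /=; first by rewrite addr0.
rewrite addrACA -big_split /= -sgD -T_addP mulrDl; congr (_ + _).
by apply: eq_bigr => k _; rewrite mulrDl IH.
Qed.
Lemma F_0P pre r : F 0 pre r = 0.
Proof. by apply: (addIr (F 0 pre r)); rewrite -F_addP !add0r. Qed.

Lemma F_vanish N Q pre r : (e < N)%N -> F ('X^N * Q) pre r = 0.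
Proof.
move=> hN; elim: r Q pre => [|x r IH] Q pre //=.
rewrite big1 ?add0r; last by move=> k _; rewrite -mulrA IH.
by rewrite -mulrA T_vanish // sg0.
Qed.

Lemma F_pre_add P p1 p2 u v r :
  F P (p1 ++ (u + v) :: p2) r = F P (p1 ++ u :: p2) r + F P (p1 ++ v :: p2) r.
Proof.
elim: r P p2 => [|x r IH] P p2 /=; first by rewrite addr0.
rewrite addrACA -big_split /= T_pre_add !size_cat /= sgD; congr (_ + _).
by apply: eq_bigr => k _; rewrite !rcons_cat /= IH.
Qed.
Lemma F_pre0 P p1 p2 r : F P (p1 ++ 0 :: p2) r = 0.
Proof. by apply: (addIr (F P (p1 ++ 0 :: p2) r)); rewrite -F_pre_add !add0r. Qed.

Lemma F_pre_mul P p1 p2 u v r :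
  F P (p1 ++ (u * v) :: p2) r = F (P * u%:P) (p1 ++ v :: p2) r + F (P * v%:P) (p1 ++ u :: p2) r.
Proof.
elim: r P p2 => [|x r IH] P p2 /=; first by rewrite addr0.
rewrite addrACA -big_split /= T_pre_mul !size_cat /= sgD; congr (_ + _).
  by apply: eq_bigr => k _; rewrite !rcons_cat /= IH ![_ * _%:P * 'X^k]mulrAC.
by rewrite ![_ * _%:P * _^`()]mulrAC.
Qed.

Lemma F_pre_anti P p1 p2 u v r :
  F P (p1 ++ u :: v :: p2) r = - F P (p1 ++ v :: u :: p2) r.
Proof.
elim: r P p2 => [|x r IH] P p2 /=; first by rewrite oppr0.
rewrite opprD -sumrN T_pre_anti !size_cat /= sgN; congr (_ + _).
by apply: eq_bigr => k _; rewrite !rcons_cat /= IH.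
Qed.

Lemma F_add P pre q x y r :
  F P pre (q ++ (x + y) :: r) = F P pre (q ++ x :: r) + F P pre (q ++ y :: r).
Proof.
elim: q P pre => [|z q IH] P pre /=.
  rewrite addrACA -big_split /= -sgD -T_addP -mulrDr -derivD; congr (_ + _).
  apply: eq_bigr => k _.
  have E : (pv (x + y))`_k = (pv x)`_k + (pv y)`_k by rewrite -coefD.
  by rewrite E -!cats1 F_pre_add.
rewrite addrACA -big_split /= T_add sgD; congr (_ + _).
by apply: eq_bigr => k _; rewrite IH.
Qed.

Lemma F_mono P pre u k r : F P pre (mono u k :: r) =
  F (P * 'X^k) (rcons pre u) r + sg (size pre) (T (P * (pv (mono u k))^`()) pre r).
Proof.
rewrite [LHS]/=; congr (_ + _); case: (leqP k m) => hk.
  rewrite (bigD1 (Ordinal (hk : (k < m.+1)%N))) //= coef_mono hk eqxx /=.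
  rewrite big1 ?addr0 // => j /negbTE; rewrite -val_eqE /= => hj.
  by rewrite coef_mono hj andbF -cats1 F_pre0.
rewrite big1; last by move=> j _; rewrite coef_mono leqNgt hk /= -cats1 F_pre0.
by rewrite mulrC F_vanish // (ltn_trans he hk).
Qed.

Lemma T_derivM P pre r (x y : A) :
  T (P * (pv (x * y))^`()) pre r = T (P * pv x * (pv y)^`()) pre r + T (P * pv y * (pv x)^`()) pre r.
Proof.
have [Q EQ] := pvM x y; have [Q2 EQ2] := derivXQ Q.
rewrite EQ derivD EQ2 derivM mulrDr T_addP.
rewrite [P * ('X^m * Q2)]mulrCA T_vanish ?addr0 //.
by rewrite mulrDr T_addP addrC; congr (T _ _ _ + T _ _ _); ring.
Qed.

Lemma F_mul0 P pre x y r :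
  F P pre ((x * y) :: r) = F (P * pv x) pre (y :: r) + F (P * pv y) pre (x :: r).
Proof.
move: x; apply: (@mono_red _ (fun x => F P pre ((x * y) :: r))
   (fun x => F (P * pv x) pre (y :: r) + F (P * pv y) pre (x :: r))) => [x1 x2|x1 x2|u k hk].
- by rewrite mulrDl (F_add P pre [::]).
- by rewrite pvD mulrDr F_addP (F_add _ pre [::]) addrACA.
move: y; apply: (@mono_red _ (fun y => F P pre ((mono u k * y) :: r))
   (fun y => F (P * pv (mono u k)) pre (y :: r) + F (P * pv y) pre (mono u k :: r))) => [y1 y2|y1 y2|v l hl].
- by rewrite mulrDr (F_add P pre [::]).
- by rewrite pvD mulrDr F_addP (F_add _ pre [::]) addrACA.
have E := F_mono P pre (u * v) (k + l) r; rewrite -mono_mul in E; rewrite E.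
rewrite (T_derivM P pre r (mono u k) (mono v l)) sgD.
rewrite (F_mono (P * pv (mono u k)) pre v l r) (F_mono (P * pv (mono v l)) pre u k r).
rewrite -!cats1 F_pre_mul.
move: hk hl; rewrite !ltnS => hk hl; rewrite !pv_mono hk hl.
have E1 : P * 'X^(k + l) * u%:P = P * (u%:P * 'X^k) * 'X^l by rewrite exprD; ring.
have E2 : P * 'X^(k + l) * v%:P = P * (v%:P * 'X^l) * 'X^k by rewrite exprD; ring.
by rewrite E1 E2 addrACA.
Qed.

Lemma F_mul P pre q x y r :
  F P pre (q ++ (x * y) :: r) = F (P * pv x) pre (q ++ y :: r) + F (P * pv y) pre (q ++ x :: r).
Proof.
elim: q P pre => [|z q IH] P pre; first exact: F_mul0.
rewrite [in LHS]/= [F (P * pv x) _ _]/= [F (P * pv y) _ _]/=.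
rewrite addrACA -big_split /= T_mul -sgD; congr (_ + _ ).
  by apply: eq_bigr => k _; rewrite IH ![_ * pv _ * 'X^k]mulrAC.
by rewrite ![_ * pv _ * _^`()]mulrAC.
Qed.

Lemma F_anti0 P pre x y r : F P pre (x :: y :: r) + F P pre (y :: x :: r) = 0.
Proof.
rewrite /= !sg_sum !big_split /=.
rewrite addrACA [X in X + _]addrACA [X in _ + X]addrC.
rewrite -addrA [X in _ + X]addrACA.
rewrite [X in X + _ + _]exchange_big -big_split big1 ?add0r; last first.
  move=> k _; rewrite -big_split /= big1 // => l _.
  by rewrite -!cats1 -!catA /= F_pre_anti mulrAC addNr.
rewrite -!big_split /= big1 // => k _.
by rewrite !size_rcons !sgS ![P * 'X^k * _]mulrAC !addNr addr0.
Qed.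

Lemma F_anti P pre q x y r :
  F P pre (q ++ x :: y :: r) = - F P pre (q ++ y :: x :: r).
Proof.
elim: q P pre => [|z q IH] P pre.
  by apply/eqP; rewrite -addr_eq0; apply/eqP; apply: F_anti0.
rewrite /= opprD -sumrN T_anti sgN; congr (_ + _).
by apply: eq_bigr => k _; rewrite IH.
Qed.
End Trunc.

Section Fc.
Variables (B : comNzRingType) (V : zmodType) (G : B * seq B -> V).

Lemma sum_keys (l : fsum B) (s : seq (B * seq B)) : uniq s -> {subset map snd l <= s} ->
  \sum_(p <- l) G p.2 *~ p.1 = \sum_(k <- s) G k *~ fcoef l k.
Proof.
move=> us sub.
under [RHS]eq_bigr => k _ do rewrite /fcoef mulrz_sumr big_mkcond /=.
rewrite exchange_big /= big_seq [RHS]big_seq; apply: eq_bigr => p pl.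
have ps : p.2 \in s by apply: sub; apply: map_f.
rewrite (bigD1_seq p.2) //= eqxx big1 ?addr0 // => k /negbTE.
by rewrite eq_sym => ->.
Qed.

Lemma sum_fc (l1 l2 : fsum B) : (forall k, fcoef l1 k = fcoef l2 k) ->
  \sum_(p <- l1) G p.2 *~ p.1 = \sum_(p <- l2) G p.2 *~ p.1.
Proof.
move=> E; set s := undup (map snd (l1 ++ l2)).
have us : uniq s by apply: undup_uniq.
rewrite (@sum_keys l1 s us) ?(@sum_keys l2 s us).
- by apply: eq_bigr => k _; rewrite E.
- by move=> k hk; rewrite mem_undup map_cat mem_cat hk orbT.
by move=> k hk; rewrite mem_undup map_cat mem_cat hk.
Qed.

Definition scalef (c : int) (l : fsum B) : fsum B := map (fun p => (c * p.1, p.2)) l.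

Lemma Z_kill N : (forall g, omega_gen N g -> \sum_(p <- g) G p.2 *~ p.1 = 0) ->
  forall l, omega_zero N l -> \sum_(p <- l) G p.2 *~ p.1 = 0.
Proof.
move=> Hg l [gs [Hgs E]].
pose L := flatten [seq scalef g.1 g.2 | g <- gs].
have EL : forall k, fcoef l k = fcoef L k.
  move=> k; rewrite E /L; elim: gs {Hgs E L} => [|g gs IH]; first by rewrite big_nil fcoef_nil.
  rewrite big_cons /= fcoef_cat IH; congr (_ + _).
  by rewrite /fcoef big_map mulr_sumr.
rewrite (sum_fc EL) /L; elim: gs Hgs {E EL L} => [|g gs IH] Hgs; first by rewrite big_nil.
rewrite /= big_cat IH ?addr0; last by move=> x hx; apply: Hgs; rewrite inE hx orbT.
rewrite big_map /=.
have H := Hg _ (Hgs g (mem_head _ _)).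
transitivity ((\sum_(p <- g.2) G p.2 *~ p.1) *~ g.1); last by rewrite H mul0rz.
by rewrite mulrz_suml addr0; apply: eq_bigr => p _; rewrite -mulrzA mulrC.
Qed.
End Fc.

Section Swap.
Variables (B : Type) (V : zmodType) (G : seq B -> V).
Hypothesis Gadj : forall p x y r, G (p ++ x :: y :: r) = - G (p ++ y :: x :: r).
Definition sgv (k : nat) (v : V) := if odd k then - v else v.

Lemma G_move p x q r : G (p ++ x :: q ++ r) = sgv (size q) (G (p ++ q ++ x :: r)).
Proof.
elim: q p => [|z q IH] p //=.
rewrite Gadj -cat_rcons IH cat_rcons /sgv /=.
by case: odd; rewrite ?opprK.
Qed.

Lemma G_swap p x q y r : G (p ++ x :: q ++ y :: r) = - G (p ++ y :: q ++ x :: r).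
Proof.
rewrite G_move (G_move p y q (x :: r)) catA Gadj -catA /sgv.
by case: odd.
Qed.
End Swap.

Lemma decomp4 (B : Type) (x0 : B) (b : seq B) i j : (i < j)%N -> (j < size b)%N ->
  exists p q r, [/\ b = p ++ nth x0 b i :: q ++ nth x0 b j :: r, size p = i &
                    (size p + (size q).+1)%N = j].
Proof.
move=> hij hj; have hi : (i < size b)%N by apply: ltn_trans hj.
exists (take i b), (take (j - i.+1)%N (drop i.+1 b)), (drop j.+1 b).
have s1 : size (take i b) = i by rewrite size_takel // ltnW.
have s2 : size (take (j - i.+1)%N (drop i.+1 b)) = (j - i.+1)%N.
  by rewrite size_takel // size_drop leq_sub2r // ltnW.
split => //; last by rewrite s1 s2 -addSnnS subnKC.
rewrite -{1}(cat_take_drop i b) (drop_nth x0 hi); congr (_ ++ _ :: _).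
rewrite -{1}(cat_take_drop (j - i.+1)%N (drop i.+1 b)) drop_drop subnK //.
by rewrite (drop_nth x0 hj).
Qed.

Lemma swap_decomp (B : Type) (x0 : B) p x q y r :
  set_nth x0 (set_nth x0 (p ++ x :: q ++ y :: r) (size p) y) (size p + (size q).+1)%N x
  = p ++ y :: q ++ x :: r.
Proof.
rewrite set_nth_mid set_nth_catr [set_nth _ _ _.+1 _]/=.
by rewrite set_nth_mid.
Qed.

Lemma set_nth_take (B : Type) (x0 : B) (b : seq B) i z : (i < size b)%N ->
  set_nth x0 b i z = take i b ++ z :: drop i.+1 b.
Proof.
move=> hi; rewrite -{1}(cat_take_drop i b) (drop_nth x0 hi).
have E := set_nth_mid x0 (take i b) (drop i.+1 b) (nth x0 b i) z.
rewrite size_takel in E; last exact: ltnW.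
exact: E.
Qed.

Section Top.
Variables (R : comNzRingType) (n m e : nat) (c : R).
Hypothesis he : (e < m)%N.
Local Notation A := (Rtrunc R m).
Local Notation pv x := (x : {poly R}).
Local Notation FF := (@F R n m e).

Definition phi (k : A * seq A) : Om R n := FF (c%:P * pv k.1) [::] k.2.

Lemma F_swap P p x q y r : FF P [::] (p ++ x :: q ++ y :: r) = - FF P [::] (p ++ y :: q ++ x :: r).
Proof.
have Gadj : forall p' x' y' r', FF P [::] (p' ++ x' :: y' :: r') = - FF P [::] (p' ++ y' :: x' :: r').
  by move=> p' x' y' r'; apply: F_anti.
exact: (G_swap Gadj p x q y r).
Qed.

Lemma F_modX P (a x : A) b : FF (P * pv (a * x)) [::] b = FF (P * pv a * pv x) [::] b.
Proof.
have [Q EQ] := pvM a x; rewrite EQ mulrDr F_addP [P * ('X^_ * _)]mulrCA F_vanish ?addr0 ?mulrA //.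
exact: ltn_trans he (ltnSn m).
Qed.

Lemma F_modX' P (a x : A) b :
  FF (P * rmodp (pv a * pv x) (mk_monic 'X^(m.+1))) [::] b = FF (P * pv a * pv x) [::] b.
Proof. exact: F_modX. Qed.

Hypothesis two : exists h : R, 2%:R * h = 1.

Lemma sum3 (V : zmodType) (G : A * seq A -> V) k1 k2 k3 :
  \sum_(p <- [:: (1, k1); (-1, k2); (-1, k3)]) G p.2 *~ p.1 = G k1 - G k2 - G k3.
Proof. by rewrite !big_cons big_nil /= addr0 mulr1z !mulrN1z addrA. Qed.
Lemma sum2 (V : zmodType) (G : A * seq A -> V) k1 k2 :
  \sum_(p <- [:: (1, k1); (1, k2)]) G p.2 *~ p.1 = G k1 + G k2.
Proof. by rewrite !big_cons big_nil /= addr0 !mulr1z. Qed.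
Lemma sum1 (V : zmodType) (G : A * seq A -> V) k1 :
  \sum_(p <- [:: (1, k1)]) G p.2 *~ p.1 = G k1.
Proof. by rewrite !big_cons big_nil /= addr0 !mulr1z. Qed.

Lemma phi_gen g : omega_gen n.+1 g -> \sum_(p <- g) phi p.2 *~ p.1 = 0.
Proof.
case => {g}.
- move=> a a' b _; rewrite sum3 /phi; cbn [fst snd].
  have E : c%:P * pv (a + a') = c%:P * pv a + c%:P * pv a' by rewrite -mulrDr.
  by rewrite E F_addP -addrA -opprD subrr.
- move=> a b i x y hb hi; rewrite sum3 /phi; cbn [fst snd].
  by rewrite !set_nth_take ?hb // F_add -addrA -opprD subrr.
- move=> a b i x y hb hi; rewrite sum3 /phi; cbn [fst snd].
  rewrite !set_nth_take ?hb // F_mul // (F_modX (c%:P) a x) (F_modX (c%:P) a y).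
  by rewrite -addrA -opprD subrr.
- move=> a b i j hb hij hj hnth; rewrite sum1 /phi; cbn [fst snd].
  have [p [q [r [Eb _ _]]]] := decomp4 0 hij (leq_trans hj (eq_leq (esym hb))).
  rewrite -hnth in Eb; set z := nth 0 b i in Eb.
  have Hs Q : FF Q [::] b = - FF Q [::] b by rewrite {1}Eb F_swap -Eb.
  have [h Eh] := two.
  set P := c%:P * pv a.
  have -> : P = P * h%:P + P * h%:P.
    by rewrite -mulrDr -polyCD -mulr2n -mulr_natl Eh mulr1.
  by rewrite F_addP {1}Hs addNr.
- move=> a b i j hb hij hj; rewrite sum2 /phi; cbn [fst snd].
  have [p [q [r [Eb Ep Eq]]]] := decomp4 0 hij (leq_trans hj (eq_leq (esym hb))).
  rewrite /swap_at; set x := nth 0 b i in Eb *; set y := nth 0 b j in Eb *.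
  have Esw : set_nth 0 (set_nth 0 b i y) j x = p ++ y :: q ++ x :: r.
    by rewrite -Ep -Eq {1}Eb swap_decomp.
  by rewrite Esw {1}Eb F_swap addNr.
Qed.

Lemma Rincl_mono (u : R) : Rincl m u = mono m u 0.
Proof. by rewrite /mono expr0 mulr1. Qed.

Lemma F_consts (P : {poly R}) (pre s : seq R) : FF P pre (map (Rincl m) s) = 0.
Proof.
elim: s P pre => [|x s IH] P pre; first by [].
rewrite map_cons Rincl_mono F_mono // IH add0r pv_mono leq0n expr0 mulr1 derivC mulr0 T_0P.
exact: sg0.
Qed.

Lemma T_consts (P : {poly R}) (pre s : seq R) : T n e P pre (map (Rincl m) s) = om n P`_e (pre ++ s).
Proof.
elim: s P pre => [|x s IH] P pre; first by rewrite cats0.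
by rewrite map_cons Rincl_mono T_mono // IH expr0 mulr1 cat_rcons.
Qed.

Lemma pv1 : pv (1 : A) = 1.
Proof. by rewrite /= polyC1. Qed.

Lemma phi_dt (i : nat) a s : (i < m)%N ->
  phi (1, (tvar R m ^+ i.+1 * Rincl m a) :: map (Rincl m) s)
  = om n (c * ((a * (e.+1 == i.+1)%:R) *+ e.+1)) s.
Proof.
move=> hi; rewrite /phi; cbn [fst snd]; rewrite [tvar R m ^+ i.+1 * _]mulrC -/(mono m a i.+1) pv1 mulr1 F_mono // F_consts add0r.
have sg0E : forall v : Om R n, sg 0 v = v by [].
rewrite sg0E T_consts pv_mono hi coefCM coef_deriv coefCM coefXn.
by [].
Qed.

Lemma main_e (w : 'I_m -> fsum R) (i0 : 'I_m) :
  nat_of_ord i0 = e -> e.+1%:R * c = 1 ->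
  (forall i, omega_elt n (w i)) -> omega_zero n.+1 (d_tensor w) -> omega_zero n (w i0).
Proof.
move=> Hi0 hc Hw Hz.
have K := @Z_kill _ _ phi n.+1 phi_gen _ Hz.
rewrite /d_tensor /dform big_map big_flatten big_map in K.
move: K; under eq_bigr => i _ do rewrite /scal_fsum /map_fsum !big_map.
under eq_bigr => i _ do under eq_bigr => p _ do [cbn [fst snd]; rewrite (phi_dt _ _ (ltn_ord i))].
rewrite big_enum (bigD1 i0) //= [X in _ + X]big1 ?addr0; last first.
  move=> i /negbTE hi; apply: big1 => p _.
  have -> : (e.+1 == (val i).+1) = false by rewrite eqSS -Hi0 -val_eqE eq_sym in hi *; rewrite hi.
  by rewrite mulr0 mul0rn mulr0 om0 mul0rz.
rewrite Hi0; under eq_bigr => p _ do rewrite eqxx /= mulr1n mulr1 -mulr_natl mulrA [c * _]mulrC hc mul1r.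
move=> K.
apply: cl_zero; rewrite clE -[RHS]K big_seq [RHS]big_seq; apply: eq_bigr => p hp.
have := allP (Hw i0) p hp; case: p hp => z [a b] hp /= /eqP hb.
by rewrite /om hb eqxx.
Qed.
End Top.

Local Close Scope ring_scope.
Unset Implicit Arguments.

Theorem lemma8p5 (R : comNzRingType) (n m : nat) :
  semilocal R -> contains_Q R -> (1 <= m)%N ->
  forall w : 'I_m -> fsum R,
    (forall i, omega_elt n (w i)) ->
    omega_zero n.+1 (d_tensor w) ->
    forall i, omega_zero n (w i).
Proof.
move=> _ hQ hm w Hw Hz i.
have [c hc] := hQ (nat_of_ord i).+1 (ltn0Sn _).
have two := hQ 2 isT.
exact: (@main_e R n m (nat_of_ord i) c (ltn_ord i) two w i (erefl _) hc Hw Hz).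
Qed.
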